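(* Let $k\ge1$ and $\gamma_1,\dots,\gamma_k\in\mathbb{R}$, and define $f:\mathbb{R}\to\mathbb{R}$ by $f(\omega)=\frac1k\sum_{j=1}^k\cos(\omega\gamma_j)$. Then for every $\alpha>0$, $\sup_{\omega\in[\alpha,100\alpha]}f(\omega)\ge-\frac15$. *)

(* Defs.v *)
From Stdlib Require Import Reals.
Open Scope R_scope.

(* f(w) = (1/k) * sum_{j=1}^k cos(w * gamma_j); gamma indexed 0..k-1 here. *)
Definition favg (k : nat) (gamma : nat -> R) (w : R) : R :=
  (/ INR k) * sum_f_R0 (fun j => cos (w * gamma j)) (k - 1).

Definition favg_image (k : nat) (gamma : nat -> R) (alpha : R) : R -> Prop :=
  fun y => exists w, alpha <= w <= 100 * alpha /\ y = favg k gamma w.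

(* Main.v *)
Require Import Defs.
From Stdlib Require Import Reals Lra Lia Psatz.
Open Scope R_scope.

Lemma cm (a b x : R) : cos (a*x) * cos (b*x) + sin (a*x) * sin (b*x) = cos ((a-b)*x).
Proof. rewrite <- cos_minus. f_equal. ring. Qed.

Lemma fejer (x : R) :
  -3 <= 5*cos x + 4*cos (2*x) + 3*cos (3*x) + 2*cos (4*x) + cos (5*x).
Proof.
  assert (H10 := cm 1 0 x). assert (H20 := cm 2 0 x). assert (H30 := cm 3 0 x).
  assert (H40 := cm 4 0 x). assert (H50 := cm 5 0 x).
  assert (H21 := cm 2 1 x). assert (H31 := cm 3 1 x). assert (H41 := cm 4 1 x).
  assert (H51 := cm 5 1 x). assert (H32 := cm 3 2 x). assert (H42 := cm 4 2 x).
  assert (H52 := cm 5 2 x). assert (H43 := cm 4 3 x). assert (H53 := cm 5 3 x).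
  assert (H54 := cm 5 4 x).
  replace (1-0) with 1 in H10 by ring. replace (2-0) with 2 in H20 by ring.
  replace (3-0) with 3 in H30 by ring. replace (4-0) with 4 in H40 by ring.
  replace (5-0) with 5 in H50 by ring. replace (2-1) with 1 in H21 by ring.
  replace (3-1) with 2 in H31 by ring. replace (4-1) with 3 in H41 by ring.
  replace (5-1) with 4 in H51 by ring. replace (3-2) with 1 in H32 by ring.
  replace (4-2) with 2 in H42 by ring. replace (5-2) with 3 in H52 by ring.
  replace (4-3) with 1 in H43 by ring. replace (5-3) with 2 in H53 by ring.
  replace (5-4) with 1 in H54 by ring.
  rewrite Rmult_0_l, cos_0, sin_0 in H10, H20, H30, H40, H50.
  rewrite Rmult_1_l in *.
  assert (P1 := sin2_cos2 x). assert (P2 := sin2_cos2 (2*x)). assert (P3 := sin2_cos2 (3*x)).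
  assert (P4 := sin2_cos2 (4*x)). assert (P5 := sin2_cos2 (5*x)).
  unfold Rsqr in *.
  assert (Q1 := Rle_0_sqr (1 + cos x + cos (2*x) + cos (3*x) + cos (4*x) + cos (5*x))).
  assert (Q2 := Rle_0_sqr (sin x + sin (2*x) + sin (3*x) + sin (4*x) + sin (5*x))).
  unfold Rsqr in *.
  nra.
Qed.

Lemma lin5 (u1 u2 u3 u4 u5 : nat -> R) (n : nat) :
  sum_f_R0 (fun j => 5*u1 j + 4*u2 j + 3*u3 j + 2*u4 j + u5 j) n =
  5*sum_f_R0 u1 n + 4*sum_f_R0 u2 n + 3*sum_f_R0 u3 n + 2*sum_f_R0 u4 n + sum_f_R0 u5 n.
Proof. induction n; simpl; [ring | rewrite IHn; ring]. Qed.

Theorem mainTheorem3 (k : nat) (gamma : nat -> R) (alpha : R) :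
  (1 <= k)%nat -> 0 < alpha ->
  forall s : R, is_lub (favg_image k gamma alpha) s -> - (1 / 5) <= s.
Proof.
  intros Hk Ha s [Hub _].
  assert (F : forall m, 1 <= m <= 5 -> favg k gamma (m*alpha) <= s).
  { intros m Hm. apply Hub. exists (m*alpha). split; [nra | reflexivity]. }
  assert (F1 := F 1 ltac:(lra)). assert (F2 := F 2 ltac:(lra)).
  assert (F3 := F 3 ltac:(lra)). assert (F4 := F 4 ltac:(lra)).
  assert (F5 := F 5 ltac:(lra)).
  unfold favg in *.
  set (T := fun m:R => sum_f_R0 (fun j => cos (m*alpha * gamma j)) (k-1)) in *.
  change (/ INR k * T 1 <= s) in F1. change (/ INR k * T 2 <= s) in F2.
  change (/ INR k * T 3 <= s) in F3. change (/ INR k * T 4 <= s) in F4.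
  change (/ INR k * T 5 <= s) in F5.
  assert (Kp : 0 < INR k) by (apply lt_0_INR; lia).
  assert (Hsum : -3 * INR k <= 5*T 1 + 4*T 2 + 3*T 3 + 2*T 4 + T 5).
  { unfold T. rewrite <- lin5.
    replace (INR k) with (INR (S (k-1))) by (f_equal; lia).
    rewrite <- (sum_cte (-3)).
    apply sum_Rle. intros j _.
    assert (E := fejer (alpha * gamma j)).
    replace (1*alpha*gamma j) with (alpha*gamma j) by ring.
    replace (2*alpha*gamma j) with (2*(alpha*gamma j)) by ring.
    replace (3*alpha*gamma j) with (3*(alpha*gamma j)) by ring.
    replace (4*alpha*gamma j) with (4*(alpha*gamma j)) by ring.
    replace (5*alpha*gamma j) with (5*(alpha*gamma j)) by ring.
    lra. }
  assert (Ki : 0 < / INR k) by (apply Rinv_0_lt_compat; lra).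
  assert (/ INR k * (5*T 1 + 4*T 2 + 3*T 3 + 2*T 4 + T 5) >= -3).
  { replace (-3) with (/ INR k * (-3 * INR k)) by (field; lra).
    apply Rle_ge. apply Rmult_le_compat_l; lra. }
  assert (E : / INR k * (5*T 1 + 4*T 2 + 3*T 3 + 2*T 4 + T 5) =
    5*(/ INR k * T 1) + 4*(/ INR k * T 2) + 3*(/ INR k * T 3) + 2*(/ INR k * T 4) + / INR k * T 5) by ring.
  lra.
Qed.
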